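(* Let $A\subseteq B$ be convex subsets of a real topological vector space $X$ such that $\operatorname{icr} A=\operatorname{fri} A$ and $A\cap\operatorname{fri} B\neq\emptyset$. Then $\operatorname{fri} A\subseteq\operatorname{fri} B$.
   Context: For a convex set $C$, a convex subset $F\subseteq C$ is a face of $C$ if for every $x\in F$ and all $y,z\in C$ with $x\in(y,z)=\{(1-t)y+tz:t\in(0,1)\}$ we have $y,z\in F$; $F_{\min}(x,C)$ is the intersection of all faces of $C$ containing $x\in C$. The intrinsic core is $\operatorname{icr} C=\{x\in C:\forall y\in C\ \exists z\in C,\ x\in(y,z)\}$ and the face relative interior is $\operatorname{fri} C=\{x\in C: C\subseteq\overline{F_{\min}(x,C)}\}$. *)

(* Defs.v *)
From HB Require Import structures.
From mathcomp Require Import all_boot all_order all_algebra.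
From mathcomp Require Import all_classical all_reals all_analysis.
Set Implicit Arguments. Unset Strict Implicit. Unset Printing Implicit Defensive.
Import Order.TTheory GRing.Theory Num.Theory.
Local Open Scope classical_set_scope.
Local Open Scope ring_scope.

Section faces.
Context {R : realType} {X : topologicalLmodType R}.

Definition cvx (C : set X) : Prop := @convex_set R X C.

Definition in_open_seg (x y z : X) : Prop :=
  exists t : R, 0 < t /\ t < 1 /\ x = (1 - t) *: y + t *: z.

Definition is_face (C F : set X) : Prop :=
  F `<=` C /\ cvx F /\
  forall x y z, F x -> C y -> C z -> in_open_seg x y z -> F y /\ F z.

Definition Fmin (x : X) (C : set X) : set X :=
  [set u | forall F, is_face C F -> F x -> F u].

Definition icr (C : set X) : set X :=
  [set x | C x /\ forall y, C y -> exists z, C z /\ in_open_seg x y z].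

Definition fri (C : set X) : set X :=
  [set x | C x /\ C `<=` closure (Fmin x C)].

End faces.

(* Main.v *)
Require Import Defs.
From HB Require Import structures.
From mathcomp Require Import all_boot all_order all_algebra.
From mathcomp Require Import all_classical all_reals all_analysis.
Local Open Scope classical_set_scope.

Theorem proposition4p5 (R : realType) (X : topologicalLmodType R) (A B : set X) :
  cvx A -> cvx B -> A `<=` B ->
  icr A = fri A -> A `&` fri B !=set0 ->
  fri A `<=` fri B.
Proof.
move=> _ _ AB icrE [x0 [Ax0 [Bx0 Hx0]]] x frix.
have : icr A x by rewrite icrE.
case=> Ax /(_ x0 Ax0) [z [Az seg]].
split; first exact: AB.
apply: subset_trans Hx0 _; apply: closureS.
move=> u Fu F faceF Fx; apply: (Fu F faceF).
by case: (faceF.2.2 x x0 z Fx (AB _ Ax0) (AB _ Az) seg).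
Qed.
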